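(* For every $\varepsilon>0$, every positive integer $k$ and every positive integer $L$ there is a number $M=M(\varepsilon,k,L)$ such that the following holds: every sufficiently long word $w\in[k]^n$ can be partitioned into at most $M$ subwords (consecutive blocks) such that the total length of those subwords that are not $(\varepsilon,L)$-regular is at most $\varepsilon n$.
   Context: $[k]=\{1,\dots,k\}$. A subword of a word $w$ is a word consisting of consecutive letters of $w$. For a word $w$ of length $n$ and a word $u$ of length $l<n$, the frequency $f_w(u)$ is the probability that a uniformly randomly chosen subword of $w$ of length $l$ (i.e., one of the $n-l+1$ such subwords, chosen uniformly) equals $u$. A word $w\in[k]^n$ is $(\varepsilon,L)$-regular if for every subword $w'$ of $w$ of length at least $\varepsilon n$ we have $|f_w(u)-f_{w'}(u)|<\varepsilon$ for every word $u$ of length at most $L$. *)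

(* Defs.v *)
From HB Require Import structures.
From mathcomp Require Import all_boot all_order all_algebra.
From mathcomp Require Import boolp reals.
Set Implicit Arguments. Unset Strict Implicit. Unset Printing Implicit Defensive.
Import Order.TTheory GRing.Theory Num.Theory.
Local Open Scope ring_scope.

Definition subword {T : Type} (w : seq T) (i l : nat) : seq T := take l (drop i w).

(* f_w(u): fraction of the (size w - size u + 1) subwords of w of length
   size u that equal u. (Used only when size u < size w.) *)
Definition freq {R : realType} {k : nat} (w u : seq 'I_k) : R :=
  (\sum_(0 <= i < (size w - size u).+1) ((subword w i (size u) == u) : nat)%:R)
  / ((size w - size u).+1)%:R.

Definition regular {R : realType} {k : nat} (eps : R) (L : nat) (w : seq 'I_k) : Prop :=
  forall i l : nat, (i + l <= size w)%N -> eps * (size w)%:R <= l%:R ->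
  forall u : seq 'I_k, (0 < size u <= L)%N -> (size u < l)%N ->
    `| freq (R := R) w u - freq (R := R) (subword w i l) u | < eps.

(* Main.v *)
From HB Require Import structures.
From mathcomp Require Import all_boot all_order all_algebra.
From mathcomp Require Import boolp reals.
From mathcomp Require Import zify ring lra.
Require Import Defs.
Import Order.TTheory GRing.Theory Num.Theory.
Local Open Scope ring_scope.

Section Core.
Variable R : realType.
Variables (g : nat -> nat -> R) (bad : nat -> nat -> bool) (K c : R).
Hypothesis g_ge0 : forall s m, 0 <= g s m.
Hypothesis g_le : forall s m, g s m <= K * m%:R.
Hypothesis gain : forall s m, bad s m -> exists i l, (i + l <= m)%N /\
  g s m + c * m%:R <= g s i + g (s+i)%N l + g (s+i+l)%N (m - i - l)%N.

Fixpoint En s P : R := if P is m :: P' then g s m + En (s+m)%N P' else 0.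
Fixpoint bm s P : nat := if P is m :: P' then ((if bad s m then m else 0) + bm (s+m) P')%N else 0%N.

Lemma En_le s P : En s P <= K * (sumn P)%:R.
Proof.
elim: P s => [|m P IH] s /=; first by rewrite mulr0.
by rewrite natrD mulrDr lerD.
Qed.

Lemma En_ge0 s P : 0 <= En s P.
Proof. by elim: P s => [|m P IH] s //=; rewrite addr_ge0. Qed.

Lemma bm_le s P : (bm s P <= sumn P)%N.
Proof. elim: P s => [|m P IH] s //=; case: (bad s m); have := IH (s+m)%N; lia. Qed.

Lemma refine_ex s P : exists P', sumn P' = sumn P /\ (size P' <= 3 * size P)%N /\
   En s P + c * (bm s P)%:R <= En s P'.
Proof.
elim: P s => [|m P IH] s /=.
  by exists [::]; rewrite mulr0 addr0.
have [Q [HQ1 [HQ2 HQ3]]] := IH (s+m)%N.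
case Hb: (bad s m).
  have [i [l [Hil Hg]]] := gain _ _ Hb.
  exists ([:: i; l; (m - i - l)%N] ++ Q); split; [|split].
  - rewrite /= HQ1; lia.
  - rewrite size_cat /=; lia.
  - rewrite /= (_ : (s + i + l + (m - i - l))%N = (s + m)%N); last by lia.
    rewrite natrD mulrDr; lra.
exists (m :: Q); split; [|split].
- by rewrite /= HQ1.
- rewrite /=; lia.
- rewrite /= add0n; lra.
Qed.

Hypothesis hc : 0 <= c.

Lemma iter_ex (eta : R) (n t : nat) : 0 <= eta -> exists P, sumn P = n /\ (size P <= 3 ^ t)%N /\
  ((bm 0 P)%:R <= eta * n%:R \/ t%:R * c * eta * n%:R <= En 0 P).
Proof.
move=> he; elim: t => [|t [P [H1 [H2 H3]]]].
  exists [:: n]; split; first by rewrite /= addn0.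
  split; first by [].
  by right; rewrite !mul0r En_ge0.
case: (lerP ((bm 0 P)%:R) (eta * n%:R)) => Hb.
  exists P; split => //; split; first by rewrite expnS; lia.
  by left.
have {}H3 : t%:R * c * eta * n%:R <= En 0 P.
  by case: H3 => // H; move: Hb; rewrite ltNge H.
have [Q [HQ1 [HQ2 HQ3]]] := refine_ex 0 P.
exists Q; split; first by rewrite HQ1.
split; first by rewrite expnS; lia.
right.
have : c * (eta * n%:R) <= c * (bm 0 P)%:R by rewrite ler_wpM2l // ltW.
rewrite -natr1 !mulrDl mul1r.
have -> : c * eta * n%:R = c * (eta * n%:R) by rewrite mulrA.
lra.
Qed.

Lemma core (eta : R) (n t : nat) : 0 <= eta -> K < t%:R * c * eta ->
  exists P, sumn P = n /\ (size P <= 3 ^ t)%N /\ (bm 0 P)%:R <= eta * n%:R.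
Proof.
move=> he hK; have [P [H1 [H2 H3]]] := iter_ex eta n t he.
exists P; split => //; split => //.
case: H3 => // H3.
case: n H1 H3 => [|n] H1 H3.
  have := bm_le 0 P; rewrite H1 leqn0 => /eqP ->; by rewrite mulr0.
have := En_le 0 P; rewrite H1 => H4.
have : K * n.+1%:R < t%:R * c * eta * n.+1%:R by rewrite ltr_pM2r.
lra.
Qed.
End Core.
Section RealLemmas.
Variable R : realType.

Lemma diff_id (y z p q : R) : 0 < p -> 0 < q ->
  y ^+ 2 / p + z ^+ 2 / q - (y + z) ^+ 2 / (p + q) = (y * q - z * p) ^+ 2 / (p * q * (p + q)).
Proof.
move=> hp hq; have hpq : p + q != 0 by rewrite lt0r_neq0 // addr_gt0.
field; rewrite hpq !lt0r_neq0 //.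
Qed.

Lemma cs2 (y z p q : R) : 0 <= y <= p -> 0 <= z <= q ->
  (y + z) ^+ 2 / (p + q) <= y ^+ 2 / p + z ^+ 2 / q.
Proof.
move=> /andP[hy hyp] /andP[hz hzq].
have [p0|pp] := eqVneq p 0.
  have y0 : y = 0 by lra.
  by rewrite p0 y0 add0r add0r expr0n /= mul0r add0r.
have [q0|qq] := eqVneq q 0.
  have z0 : z = 0 by lra.
  by rewrite q0 z0 addr0 addr0 expr0n /= mul0r addr0.
have hp : 0 < p by rewrite lt0r pp; lra.
have hq : 0 < q by rewrite lt0r qq; lra.
rewrite -subr_ge0 diff_id //; apply: divr_ge0; first exact: sqr_ge0.
by rewrite !mulr_ge0 // ?addr_ge0 // ltW.
Qed.

Lemma err (C A q m : R) : 0 < q -> q <= m -> 0 <= C <= q -> 0 <= A - C <= m - q ->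
  `|C / q - A / m| <= 2 * (m - q) / m.
Proof.
move=> hq hqm /andP[h1 h2] /andP[h3 h4].
have hm : 0 < m by lra.
have -> : C / q - A / m = (C * (m - q) - (A - C) * q) / (q * m).
  by field; rewrite !lt0r_neq0.
rewrite normrM [`|(q * m)^-1|]ger0_norm; last by rewrite invr_ge0 mulr_ge0 // ltW.
rewrite ler_pdivrMr ?mulr_gt0 //.
have -> : 2 * (m - q) / m * (q * m) = 2 * (m - q) * q.
  by field; rewrite lt0r_neq0.
rewrite ler_norml; apply/andP; split; nra.
Qed.

Lemma gain2 (y z p q eta : R) : 0 < p -> 0 < q -> 0 <= eta -> eta * (p + q) <= p ->
  eta <= `|y / p - (y + z) / (p + q)| ->
  (y + z) ^+ 2 / (p + q) + eta ^+ 3 * (p + q) <= y ^+ 2 / p + z ^+ 2 / q.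
Proof.
move=> hp hq he hpe hd.
set d := y / p - (y + z) / (p + q).
have hpq : 0 < p + q by rewrite addr_gt0.
have E1 : y * q - z * p = p * (p + q) * d.
  rewrite /d; field; rewrite !lt0r_neq0 //.
rewrite -lerBrDl diff_id // E1.
have -> : (p * (p + q) * d) ^+ 2 / (p * q * (p + q)) = p * (p + q) * d ^+ 2 / q.
  field; rewrite !lt0r_neq0 //.
have hd2 : eta ^+ 2 <= d ^+ 2.
  rewrite -real_normK ?num_real // -[d ^+ 2]real_normK ?num_real //.
  by rewrite lerXn2r // ?nnegrE // ?normr_ge0 // ger0_norm.
have h1 : p * d ^+ 2 <= p * (p + q) * d ^+ 2 / q.
  rewrite ler_pdivlMr //.
  have := mulr_ge0 (mulr_ge0 (ltW hp) (ltW hp)) (sqr_ge0 d).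
  nra.
have h2 : eta ^+ 3 * (p + q) <= p * d ^+ 2.
  have -> : eta ^+ 3 * (p + q) = eta ^+ 2 * (eta * (p + q)) by ring.
  apply: le_trans (_ : eta ^+ 2 * p <= _).
    by rewrite ler_wpM2l // sqr_ge0.
  by rewrite mulrC ler_wpM2l // ltW.
lra.
Qed.
Lemma T_ge0 (x1 x2 x3 a b c : R) : 0 <= x1 <= a -> 0 <= x2 <= b -> 0 <= x3 <= c ->
  (x1 + x2 + x3) ^+ 2 / (a + b + c) <= x1 ^+ 2 / a + x2 ^+ 2 / b + x3 ^+ 2 / c.
Proof.
move=> h1 h2 h3.
have h13 : 0 <= x1 + x3 <= a + c by move: h1 h3 => /andP[? ?] /andP[? ?]; apply/andP; split; lra.
have := cs2 _ _ _ _ h13 h2; have := cs2 _ _ _ _ h1 h3.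
have -> : x1 + x2 + x3 = x1 + x3 + x2 by ring.
have -> : a + b + c = a + c + b by ring.
lra.
Qed.

Lemma T_gain (x1 x2 x3 a b c eta : R) : 0 <= x1 <= a -> 0 <= x2 <= b -> 0 <= x3 <= c ->
  0 < b -> 0 < eta -> eta * (a + b + c) <= b ->
  eta <= `|x2 / b - (x1 + x2 + x3) / (a + b + c)| ->
  (x1 + x2 + x3) ^+ 2 / (a + b + c) + eta ^+ 3 * (a + b + c) <= x1 ^+ 2 / a + x2 ^+ 2 / b + x3 ^+ 2 / c.
Proof.
move=> h1 h2 h3 hb he hl hd.
have [q0|qn] := eqVneq (a + c) 0.
  move: h1 h3 => /andP[? ?] /andP[? ?].
  have a0 : a = 0 by lra.
  have c0 : c = 0 by lra.
  have x10 : x1 = 0 by lra.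
  have x30 : x3 = 0 by lra.
  move: hd; rewrite a0 c0 x10 x30 !(add0r, addr0) subrr normr0; lra.
have hq : 0 < a + c by move: h1 h3 => /andP[? ?] /andP[? ?]; rewrite lt0r qn /=; lra.
have h13 : 0 <= x1 + x3 <= a + c by move: h1 h3 => /andP[? ?] /andP[? ?]; apply/andP; split; lra.
have E1 : x2 + (x1 + x3) = x1 + x2 + x3 by ring.
have E2 : b + (a + c) = a + b + c by ring.
have := gain2 x2 (x1 + x3) b (a + c) eta hb hq (ltW he).
rewrite E1 E2 => /(_ hl hd).
have := cs2 _ _ _ _ h1 h3.
lra.
Qed.

Lemma tri (a b c d e1 e2 eps : R) : eps <= `|a - b| -> `|a - c| <= e1 -> `|b - d| <= e2 ->
  e1 + e2 <= eps / 2 -> eps / 2 <= `|c - d|.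
Proof.
move=> h1 h2 h3 h4.
move: h2 h3; rewrite !ler_norml => /andP[? ?] /andP[? ?].
move: h1; rewrite ler_normr => /orP[] h1; rewrite ler_normr; apply/orP; [left|right]; lra.
Qed.
End RealLemmas.
Section Words.
Variable k : nat.

Definition occ (w u : seq 'I_k) (j : nat) : nat := (subword w j (size u) == u).
Definition Acnt (w u : seq 'I_k) (s m : nat) : nat := (\sum_(0 <= j < m) occ w u (s + j))%N.

Lemma Acnt_add w u s a b : Acnt w u s (a + b) = (Acnt w u s a + Acnt w u (s + a) b)%N.
Proof.
rewrite /Acnt; elim: b => [|b IH]; first by rewrite addn0 [in X in (_ + X)%N]big_geq // addn0.
by rewrite addnS !big_nat_recr //= IH addnA addnA.
Qed.

Lemma Acnt_le w u s m : (Acnt w u s m <= m)%N.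
Proof.
rewrite /Acnt; elim: m => [|m IH]; first by rewrite big_geq.
rewrite big_nat_recr //=; have : (occ w u (s + m) <= 1)%N by rewrite /occ; case: eqP.
lia.
Qed.

Lemma subword_size (w : seq 'I_k) s m : (s + m <= size w)%N -> size (subword w s m) = m.
Proof. by move=> h; rewrite /subword size_takel // size_drop; lia. Qed.

Lemma subword_sub (w : seq 'I_k) s m i l : (i + l <= m)%N ->
  subword (subword w s m) i l = subword w (s + i) l.
Proof.
move=> h; rewrite /subword.
have -> : m = ((m - i) + i)%N by lia.
rewrite -take_drop drop_drop take_takel; last by lia.
by rewrite addnC.
Qed.

Lemma freq_block (R : realType) (w u : seq 'I_k) s m : (s + m <= size w)%N ->
  (size u <= m)%N ->
  freq (R := R) (subword w s m) u =
    (Acnt w u s (m - size u).+1)%:R / ((m - size u).+1)%:R.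
Proof.
move=> h hum; rewrite /freq subword_size //; congr (_ / _).
rewrite /Acnt natr_sum; apply: eq_big_nat => j /andP[_ hj].
by rewrite /occ subword_sub //; lia.
Qed.

Lemma err_block (R : realType) w u s m (L : nat) : (0 < size u)%N -> (size u <= L)%N -> (size u <= m)%N ->
 `|(Acnt w u s (m - size u).+1)%:R / ((m - size u).+1)%:R - (Acnt w u s m)%:R / m%:R| <= 2 * L%:R / m%:R :> R.
Proof.
move=> hu hL hm.
set q := (m - size u).+1.
have hq : (q <= m)%N by rewrite /q; lia.
have hA : Acnt w u s m = (Acnt w u s q + Acnt w u (s + q) (m - q))%N.
  by rewrite -Acnt_add subnKC.
apply: le_trans (_ : 2 * (m%:R - q%:R) / m%:R <= _).
  apply: err; first by rewrite ltr0n.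
  - by rewrite ler_nat.
  - by rewrite ler0n /= ler_nat Acnt_le.
  - rewrite hA natrD addrAC subrr add0r ler0n /= -natrB // ler_nat; exact: Acnt_le.
rewrite ler_wpM2r ?invr_ge0 ?ler0n // ler_wpM2l // -natrB // ler_nat /q; lia.
Qed.

Definition Uw (L : nat) : seq (seq 'I_k) :=
  flatten [seq [seq val t | t : p.-tuple 'I_k] | p <- iota 1 L].

Lemma mem_Uw (L : nat) (u : seq 'I_k) : (0 < size u <= L)%N -> u \in Uw L.
Proof.
move=> hu; apply/flattenP.
exists [seq val t | t : (size u).-tuple 'I_k].
  apply/mapP; exists (size u) => //; rewrite mem_iota; lia.
apply/mapP; exists (in_tuple u) => //; by rewrite mem_enum.
Qed.

Definition gw (R : realType) (L : nat) (w : seq 'I_k) (s m : nat) : R :=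
  \sum_(u <- Uw L) (Acnt w u s m)%:R ^+ 2 / m%:R.

Lemma sum_le_const (R : realType) (T : Type) (r : seq T) (F : T -> R) c :
  (forall x, F x <= c) -> \sum_(x <- r) F x <= (size r)%:R * c.
Proof.
move=> h; elim: r => [|x r IH]; first by rewrite big_nil mul0r.
by rewrite big_cons /= -natr1 mulrDl mul1r addrC lerD.
Qed.

Lemma gw_ge0 (R : realType) L w s m : 0 <= gw R L w s m.
Proof. by apply: sumr_ge0 => u _; rewrite divr_ge0 ?sqr_ge0 ?ler0n. Qed.

Lemma gw_le (R : realType) L w s m : gw R L w s m <= (size (Uw L))%:R * m%:R.
Proof.
apply: sum_le_const => u.
have hA := Acnt_le w u s m.
case: m hA => [|m] hA.
  by rewrite invr0 mulr0.
rewrite ler_pdivrMr ?ltr0n // expr2 ler_pM ?ler0n ?ler_nat //.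
Qed.

Lemma Acnt3 w u s i l r : Acnt w u s (i + l + r) =
  (Acnt w u s i + Acnt w u (s + i) l + Acnt w u (s + i + l) r)%N.
Proof. by rewrite !Acnt_add addnA. Qed.

Lemma gainw (R : realType) (eps : R) (L S : nat) (w : seq 'I_k) s m :
  0 < eps -> 8 * L%:R <= eps * S%:R -> 8 * L%:R <= eps ^+ 2 * S%:R -> (0 < L)%N ->
  (S <= m)%N -> (s + m <= size w)%N -> ~ regular eps L (subword w s m) ->
  exists i l, (i + l <= m)%N /\ gw R L w s m + (eps / 2) ^+ 3 * m%:R <=
     gw R L w s i + gw R L w (s + i) l + gw R L w (s + i + l) (m - i - l).
Proof.
move=> he hS1 hS2 hL hSm hsm hnr.
have hv := subword_size _ _ _ hsm.
have [i [l [u [hil [hl [hu [hul hge]]]]]]] : exists i l u, (i + l <= m)%N /\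
    eps * m%:R <= l%:R /\ (0 < size u <= L)%N /\ (size u < l)%N /\
    eps <= `|freq (R := R) (subword w s m) u - freq (R := R) (subword (subword w s m) i l) u|.
  case: (pselect (exists i l u, (i + l <= m)%N /\
    eps * m%:R <= l%:R /\ (0 < size u <= L)%N /\ (size u < l)%N /\
    eps <= `|freq (R := R) (subword w s m) u - freq (R := R) (subword (subword w s m) i l) u|)) => // hno.
  exfalso; apply: hnr => i l hil hl u hu hul; rewrite ltNge; apply/negP => hge.
  by apply: hno; exists i, l, u; rewrite hv in hil hl; do !split.
exists i, l; split => //.
set p := size u in hu hul hge.
have hS0 : (0 < S)%N.
  case: S hS1 hS2 hSm => // h _ _; move: h; rewrite mulr0n mulr0 => h.
  have : (0 < L%:R :> R) by rewrite ltr0n.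
  lra.
have hm0 : (0 < m)%N by lia.
have hl0 : (0 < l)%N by lia.
have hsil : (s + i + l <= size w)%N by lia.
rewrite freq_block // in hge; last by lia.
rewrite subword_sub // freq_block // in hge; last by lia.
have hu1 : (0 < size u)%N by move: hu => /andP[].
have hu2 : (size u <= L)%N by move: hu => /andP[].
have e1 := err_block R w u s m L hu1 hu2 (_ : (size u <= m)%N).
have e2 := err_block R w u (s + i) l L hu1 hu2 (_ : (size u <= l)%N).

have {}e1 := e1 (ltnW (leq_trans hul (leq_trans (leq_addl _ _) hil))).
have {}e2 := e2 (ltnW hul).
have hmR : 0 < m%:R :> R by rewrite ltr0n.
have hlR : 0 < l%:R :> R by rewrite ltr0n.
have hSmR : S%:R <= m%:R :> R by rewrite ler_nat.
have b1 : 2 * L%:R / m%:R <= eps / 4.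
  rewrite ler_pdivrMr //.
  have : eps * S%:R <= eps * m%:R by rewrite ler_wpM2l // ltW.
  lra.
have b2 : 2 * L%:R / l%:R <= eps / 4.
  rewrite ler_pdivrMr //.
  have h1 : eps ^+ 2 * S%:R <= eps ^+ 2 * m%:R by rewrite ler_wpM2l // sqr_ge0.
  have h2 : eps * (eps * m%:R) <= eps * l%:R by rewrite ler_wpM2l // ltW.
  have h3 : eps ^+ 2 * m%:R = eps * (eps * m%:R) by rewrite expr2 mulrA.
  lra.
have hge' := hge.
rewrite /p in hge'.
have hb12 : 2 * L%:R / m%:R + 2 * L%:R / l%:R <= eps / 2.
  move: b1 b2; clear; move=> b1 b2; lra.
have hD := @tri R _ _ _ _ _ _ _ hge' e1 e2 hb12.
rewrite distrC in hD.

pose r := (m - i - l)%N.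
have hm : m = (i + l + r)%N by rewrite /r -subnDA subnKC.
rewrite /gw -/r.
pose T := fun v : seq 'I_k =>
  (Acnt w v s i)%:R ^+ 2 / i%:R + (Acnt w v (s + i) l)%:R ^+ 2 / l%:R +
  (Acnt w v (s + i + l) r)%:R ^+ 2 / r%:R - (Acnt w v s m)%:R ^+ 2 / m%:R : R.
have HT : forall v, 0 <= T v.
  move=> v; rewrite /T subr_ge0 hm Acnt3 !natrD.
  by apply: T_ge0; rewrite ler0n ler_nat Acnt_le.
have HTu : (eps / 2) ^+ 3 * m%:R <= T u.
  rewrite /T.
  move: hD hl; rewrite hm Acnt3 !natrD => hD hl.
  have he2 : 0 < eps / 2 by rewrite divr_gt0.
  have hl2 : eps / 2 * (i%:R + l%:R + r%:R) <= l%:R.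
    have h0 : 0 <= i%:R + l%:R + r%:R :> R by rewrite !addr_ge0 ?ler0n.
    clear -h0 hl he; nra.
  have B1 : (0:R) <= ((Acnt w u s i)%:R : R) <= (i%:R : R) by rewrite ler0n ler_nat Acnt_le.
  have B2 : (0:R) <= ((Acnt w u (s + i) l)%:R : R) <= (l%:R : R) by rewrite ler0n ler_nat Acnt_le.
  have B3 : (0:R) <= ((Acnt w u (s + i + l) r)%:R : R) <= (r%:R : R) by rewrite ler0n ler_nat Acnt_le.
  have Hg := @T_gain R _ _ _ _ _ _ _ B1 B2 B3 hlR he2 hl2 hD.
  move: Hg; clear; move=> Hg; lra.
have Hsum : \sum_(v <- Uw L) T v <= \sum_(v <- Uw L) (Acnt w v s i)%:R ^+ 2 / i%:R +
   \sum_(v <- Uw L) (Acnt w v (s + i) l)%:R ^+ 2 / l%:R +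
   \sum_(v <- Uw L) (Acnt w v (s + i + l) r)%:R ^+ 2 / r%:R -
   \sum_(v <- Uw L) (Acnt w v s m)%:R ^+ 2 / m%:R.
  by rewrite /T sumrB !big_split.
have Hu : T u <= \sum_(v <- Uw L) T v.
  rewrite (big_rem u) ?mem_Uw //= lerDl; exact: sumr_ge0.
move: Hsum Hu HTu; clear; move=> Hsum Hu HTu; lra.
Qed.

Fixpoint mkblocks (w : seq 'I_k) s (P : seq nat) : seq (seq 'I_k) :=
  if P is m :: P' then subword w s m :: mkblocks w (s + m)%N P' else [::].

Lemma flatten_mk w s P : flatten (mkblocks w s P) = take (sumn P) (drop s w).
Proof.
elim: P s => [|m P IH] s /=; first by rewrite take0.
by rewrite IH takeD drop_drop (addnC m s).
Qed.

Lemma size_mk w s P : size (mkblocks w s P) = size P.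
Proof. by elim: P s => [|m P IH] s //=; rewrite IH. Qed.

Lemma sum_mk (R : realType) (eps : R) (L S : nat) w s P : (s + sumn P <= size w)%N ->
  (\sum_(v <- mkblocks w s P | ~~ `[< regular eps L v >]) size v <=
   bm (fun s m => [&& (S <= m)%N, (s + m <= size w)%N & ~~ `[< regular eps L (subword w s m) >]]) s P
   + S * size P)%N.
Proof.
elim: P s => [|m P IH] s /= h; first by rewrite big_nil.
rewrite big_cons.
have hsm : (s + m <= size w)%N by lia.
have hP : (s + m + sumn P <= size w)%N by lia.
have := IH (s + m)%N hP.
rewrite subword_size //.
case: `[< regular eps L (subword w s m) >] => /=.
  rewrite !andbF /=; lia.
case: (leqP S m) => hS /=; rewrite ?hsm /=; lia.
Qed.
End Words.

Theorem lemma14 (R : realType) (eps : R) (k L : nat) :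
  0 < eps -> (0 < k)%N -> (0 < L)%N ->
  exists M : nat, exists N : nat, forall w : seq 'I_k, (N <= size w)%N ->
    exists ws : seq (seq 'I_k),
      [/\ flatten ws = w, (size ws <= M)%N &
          (\sum_(v <- ws | ~~ `[< regular eps L v >]) size v)%:R
            <= eps * (size w)%:R].
Proof.
move=> he hk hL.
pose eta := eps / 2. pose c := eta ^+ 3. pose K : R := (size (Uw k L))%:R.
have heta : 0 < eta by rewrite divr_gt0.
have hc : 0 < c by rewrite exprn_gt0.
have hce : 0 < c * eta by rewrite mulr_gt0.
pose t := Num.Def.archi_bound (K / (c * eta)).
have ht : K < t%:R * c * eta.
  have h0 : 0 <= K / (c * eta) by rewrite divr_ge0 ?ler0n // ltW.
  have := archi_boundP h0; rewrite ltr_pdivrMr // -mulrA //.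
have heps2 : 0 < eps ^+ 2 by rewrite exprn_gt0.
pose S := Num.Def.archi_bound (8 * L%:R / eps + 8 * L%:R / eps ^+ 2).
have hS : 8 * L%:R / eps + 8 * L%:R / eps ^+ 2 < S%:R.
  by apply: archi_boundP; rewrite addr_ge0 // divr_ge0 ?mulr_ge0 ?ler0n // ltW.
have hS1 : 8 * L%:R <= eps * S%:R.
  have h2 : 0 <= 8 * L%:R / eps ^+ 2 by rewrite divr_ge0 ?mulr_ge0 ?ler0n // ltW.
  have h1 : 8 * L%:R / eps < S%:R by move: hS h2; clear; move=> hS h2; lra.
  move: h1; rewrite ltr_pdivrMr // => h; rewrite [_ * S%:R]mulrC; exact: ltW.
have hS2 : 8 * L%:R <= eps ^+ 2 * S%:R.
  have h2 : 0 <= 8 * L%:R / eps by rewrite divr_ge0 ?mulr_ge0 ?ler0n // ltW.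
  have h1 : 8 * L%:R / eps ^+ 2 < S%:R by move: hS h2; clear; move=> hS h2; lra.
  move: h1; rewrite ltr_pdivrMr // => h; rewrite [_ * S%:R]mulrC; exact: ltW.
pose M := (3 ^ t)%N.
pose N := Num.Def.archi_bound (2 * S%:R * M%:R / eps).
exists M, N => w hN.
pose bad := fun s m => [&& (S <= m)%N, (s + m <= size w)%N & ~~ `[< regular eps L (subword w s m) >]].
have gain : forall s m, bad s m -> exists i l, (i + l <= m)%N /\ gw k R L w s m + c * m%:R <= gw k R L w s i + gw k R L w (s + i)%N l + gw k R L w (s + i + l)%N (m - i - l)%N.
  move=> s m /and3P[h1 h2 /asboolPn h3]; exact: (@gainw k R eps L S w s m he hS1 hS2 hL h1 h2 h3).
have [P [HP1 [HP2 HP3]]] := @core R (gw k R L w) bad K c (gw_ge0 k R L w) (gw_le k R L w) gain (ltW hc) eta (size w) t (ltW heta) ht.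
exists (mkblocks k w 0 P); split.
- by rewrite flatten_mk HP1 drop0 take_size.
- by rewrite size_mk.
have hsum := @sum_mk k R eps L S w 0 P (_ : (0 + sumn P <= size w)%N); rewrite -/bad in hsum.
have {}hsum := hsum ltac:(by rewrite add0n HP1).
have hN2 : 2 * S%:R * M%:R / eps < (size w)%:R.
  apply: lt_le_trans (archi_boundP _) _; first by rewrite divr_ge0 ?mulr_ge0 ?ler0n // ltW.
  by rewrite ler_nat.
rewrite ltr_pdivrMr // in hN2.
have hSP : (S * size P <= S * M)%N by rewrite leq_mul2l HP2 orbT.
apply: le_trans (_ : ((bm bad 0 P)%:R + (S * M)%:R <= _)).
  by rewrite -natrD ler_nat (leq_trans hsum) // leq_add2l.
rewrite natrM.
move: HP3 hN2; rewrite /eta; clear; move=> HP3 hN2; lra.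
Qed.
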